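(* Let $n\ge2$, $y=(y_1,\dots,y_{n-1},q)\in\mathbb C^n$ and $j\in\{1,\dots,[n/2]\}$. Let $\tilde y^j\in\mathbb C^n$ be obtained from $y$ by interchanging the coordinates $y_j$ and $y_{n-j}$ (all other coordinates, including $q$, unchanged). Then $y\in\widetilde{\mathbb G}_n$ if and only if $\tilde y^j\in\widetilde{\mathbb G}_n$, and $y\in\widetilde\Gamma_n$ if and only if $\tilde y^j\in\widetilde\Gamma_n$.
   Context: $\mathbb D$ is the open unit disc. $\widetilde{\mathbb G}_n=\{(y_1,\dots,y_{n-1},q)\in\mathbb C^n: q\in\mathbb D,\ y_j=\beta_j+\bar\beta_{n-j}q$ for some $\beta_j\in\mathbb C$ with $|\beta_j|+|\beta_{n-j}|<\binom{n}{j}$, $j=1,\dots,n-1\}$; $\widetilde\Gamma_n$ is its closure. *)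

(* Defs.v *)
From HB Require Import structures.
From mathcomp Require Import all_boot all_order all_algebra.
From mathcomp Require Import complex.
Set Implicit Arguments. Unset Strict Implicit. Unset Printing Implicit Defensive.
Import Order.TTheory GRing.Theory Num.Theory.
Local Open Scope ring_scope.
Local Open Scope complex_scope.

(* A point y = (y_1,...,y_{n-1}, q) of C^n is a row vector 'rV[R[i]]_n.
   Column index k (0-based) holds y_{k+1} for k < n-1, and column n-1 holds q. *)

(* coordinate with 0-based nat index k (0 if k >= n; never used out of range) *)
Definition coord (R : rcfType) (n : nat) (y : 'rV[R[i]]_n) (k : nat) : R[i] :=
  if insub k is Some i then y 0 i else 0.

Definition ycoord (R : rcfType) (n : nat) (y : 'rV[R[i]]_n) (j : nat) : R[i] :=
  coord y j.-1.

Definition qcoord (R : rcfType) (n : nat) (y : 'rV[R[i]]_n) : R[i] :=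
  coord y n.-1.

Definition Gtilde (R : rcfType) (n : nat) (y : 'rV[R[i]]_n) : Prop :=
  `|qcoord y| < 1 /\
  exists beta : nat -> R[i],
    forall j : nat, (1 <= j <= n.-1)%N ->
      ycoord y j = beta j + (beta (n - j)%N)^* * qcoord y /\
      `|beta j| + `|beta (n - j)%N| < ('C(n, j))%:R.

(* Its closure \widetilde{Gamma}_n in C^n (the usual Euclidean topology,
   written with the equivalent max-coordinate distance). *)
Definition Gammatilde (R : rcfType) (n : nat) (y : 'rV[R[i]]_n) : Prop :=
  forall eps : R, 0 < eps ->
    exists z : 'rV[R[i]]_n, Gtilde z /\
      forall k : 'I_n, `|y 0 k - z 0 k| < eps%:C.

Definition swapj (R : rcfType) (n : nat) (j : nat) (y : 'rV[R[i]]_n) : 'rV[R[i]]_n :=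
  \row_(k < n)
     (if (k == j.-1 :> nat) then coord y (n - j).-1
      else if (k == (n - j).-1 :> nat) then coord y j.-1
      else y 0 k).

(* Main.v *)
Require Import Defs.
From HB Require Import structures.
From mathcomp Require Import all_boot all_order all_algebra.
From mathcomp Require Import complex reals.
From mathcomp Require Import zify.
Import Order.TTheory GRing.Theory Num.Theory.
Local Open Scope ring_scope.

Definition tau0 (n j m : nat) : nat :=
  if m == j.-1 then (n - j).-1 else if m == (n - j).-1 then j.-1 else m.

Lemma coord_ord (R : rcfType) n (y : 'rV[R[i]]_n) (k : 'I_n) :
  Defs.coord y k = y 0 k.
Proof. by rewrite /Defs.coord valK. Qed.

Lemma coord_swap (R : rcfType) n j (y : 'rV[R[i]]_n) m :
  (1 <= j)%N -> (j + j <= n)%N ->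
  Defs.coord (swapj j y) m = Defs.coord y (tau0 n j m).
Proof.
move=> j1 jn; rewrite /Defs.coord /tau0.
case: insubP => [k km kv|km].
  rewrite -kv mxE.
  case: (val k == j.-1); first by [].
  by case: (val k == (n - j).-1); last by rewrite valK.
case: eqP => [e|_]; first by exfalso; move/negP: km; apply; lia.
case: eqP => [e|_]; first by exfalso; move/negP: km; apply; lia.
by rewrite insubF //; apply/negbTE.
Qed.

Lemma swapK (R : rcfType) n j (y : 'rV[R[i]]_n) :
  (1 <= j)%N -> (j + j <= n)%N -> swapj j (swapj j y) = y.
Proof.
move=> j1 jn; apply/rowP => k.
rewrite -!coord_ord !coord_swap //; congr (Defs.coord y _).
rewrite /tau0; have := ltn_ord k.
by repeat case: eqP; lia.
Qed.

Lemma G_swap (R : rcfType) n j (y : 'rV[R[i]]_n) :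
  (2 <= n)%N -> (1 <= j)%N -> (j + j <= n)%N -> Gtilde y -> Gtilde (swapj j y).
Proof.
move=> n2 j1 jn [hq [beta hb]].
have qE : qcoord (swapj j y) = qcoord y.
  rewrite /qcoord coord_swap // /tau0.
  by case: eqP => [e|_]; [lia | case: eqP => [e|_] //; lia].
split; first by rewrite qE.
pose tau k := if k == j then (n - j)%N else if k == (n - j)%N then j else k.
exists (fun k => beta (tau k)) => k /andP [k1 kn].
have t1 : (1 <= tau k <= n.-1)%N.
  by rewrite /tau; repeat case: eqP => _; apply/andP; split; lia.
have tn : tau (n - k)%N = (n - tau k)%N.
  by rewrite /tau; repeat case: eqP => /=; lia.
have [e1 e2] := hb _ t1.
rewrite tn qE; split.
  rewrite -e1 /ycoord coord_swap //; congr (Defs.coord y _).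
  by rewrite /tau0 /tau; repeat case: eqP => /=; lia.
have -> : 'C(n, k) = 'C(n, tau k).
  rewrite /tau; case: eqP => [->|_]; first by rewrite bin_sub //; lia.
  by case: eqP => [->|_] //; rewrite bin_sub //; lia.
by [].
Qed.

Lemma Gamma_swap (R : rcfType) n j (y : 'rV[R[i]]_n) :
  (2 <= n)%N -> (1 <= j)%N -> (j + j <= n)%N -> Gammatilde y -> Gammatilde (swapj j y).
Proof.
move=> n2 j1 jn hG eps he.
have [z [hz hd]] := hG eps he.
exists (swapj j z); split; first exact: G_swap.
move=> k; rewrite -!coord_ord !coord_swap //.
have tk : (tau0 n j k < n)%N.
  by have := ltn_ord k; rewrite /tau0; repeat case: eqP => _; lia.
have := hd (Ordinal tk); by rewrite -!coord_ord.
Qed.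

Theorem mainTheorem4 (R : realType) (n : nat) (y : 'rV[R[i]]_n) (j : nat) :
  (2 <= n)%N -> (1 <= j <= n./2)%N ->
  (Gtilde y <-> Gtilde (swapj j y)) /\
  (Gammatilde y <-> Gammatilde (swapj j y)).
Proof.
move=> n2 /andP [j1 jh].
have jn : (j + j <= n)%N by lia.
split; split => h; first exact: G_swap.
- by have := G_swap _ _ _ _ n2 j1 jn h; rewrite swapK.
- exact: Gamma_swap.
- by have := Gamma_swap _ _ _ _ n2 j1 jn h; rewrite swapK.
Qed.
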